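(* Let $B=\{[0:0:1],[0:1:0],[1:0:0],[1:1:1]\}\subset\mathbb P^2$, let $Q_B=\{a_1x_2x_3+a_2x_1x_3+a_3x_1x_2 : a_1+a_2+a_3=0\}$ be the $2$-dimensional space of quadrics vanishing on $B$, and let $S_B$ be the (4-dimensional) space of homogeneous sextics $f\in\mathbb C[x_1,x_2,x_3]$ such that the double cover of $\mathbb P^2$ branched along $\{f=0\}$ has singularities equal to or worse than rational double points of type $D_4$ above every point of $B$. Then the map $(Q_B)^3\to\mathbb C[x_1,x_2,x_3]$, $(q_1,q_2,q_3)\mapsto q_1q_2q_3$, induces a surjection $\mathbb P(Q_B)^3\to\mathbb P(S_B)$, and this surjection can be identified with the natural projection $(\mathbb P^1)^3\to(\mathbb P^1)^3/\mathfrak S_3\cong\mathbb P^3$ onto the symmetric product.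
   Context: Having a singularity ''equal to or worse than a rational double point of type $D_4$'' above a point $p$ means that $f$ vanishes to order at least $3$ at $p$ (equivalently, the Hessian matrix of $f$ vanishes at $p$). $\mathfrak S_3$ acts on $(\mathbb P^1)^3$ by permuting factors. *)

(* Defs.v *)
From HB Require Import structures.
From mathcomp Require Import all_boot all_order all_algebra all_fingroup.
From mathcomp Require Import mpoly.
Set Implicit Arguments. Unset Strict Implicit. Unset Printing Implicit Defensive.
Import Order.TTheory GRing.Theory.
Local Open Scope ring_scope.

Section Defs.
Variable F : fieldType.
Notation P := {mpoly F[3]}.

Definition x1 : P := 'X_(0 : 'I_3).
Definition x2 : P := 'X_(1 : 'I_3).
Definition x3 : P := 'X_(2 : 'I_3).

(* Coordinates of a point of P^2 (a representative in F^3). *)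
Definition pt (a b c : F) : 'I_3 -> F := fun i => [:: a; b; c]`_i.

Definition inB (p : 'I_3 -> F) : Prop :=
  [\/ p = pt 0 0 1, p = pt 0 1 0, p = pt 1 0 0 | p = pt 1 1 1].

Definition vanish_order3 (f : P) (p : 'I_3 -> F) : Prop :=
  [/\ f.@[p] = 0,
      forall i : 'I_3, (mderiv i f).@[p] = 0 &
      forall i j : 'I_3, (mderiv i (mderiv j f)).@[p] = 0].

(* S_B : homogeneous sextics (or 0) whose double cover has singularities
   equal to or worse than D_4 above every point of B. *)
Definition inSB (f : P) : Prop :=
  f \is 6.-homog /\ forall p, inB p -> vanish_order3 f p.

Definition quadB (a1 a2 a3 : F) : P :=
  a1 *: (x2 * x3) + a2 *: (x1 * x3) + a3 *: (x1 * x2).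
Definition inQB (q : P) : Prop :=
  exists a1 a2 a3 : F, a1 + a2 + a3 = 0 /\ q = quadB a1 a2 a3.

(* projective equality: proportional by a nonzero scalar *)
Definition proportional (p q : P) : Prop :=
  exists c : F, c != 0 /\ p = c *: q.

End Defs.

(* Main.v *)
Require Import Defs.
From HB Require Import structures.
From mathcomp Require Import all_boot all_order all_algebra all_fingroup.
From mathcomp Require Import mpoly.
From mathcomp Require Import ring zify.
Import Order.TTheory GRing.Theory.
Local Open Scope ring_scope.
Set Implicit Arguments. Unset Strict Implicit. Unset Printing Implicit Defensive.

Section Main.
Variable F : closedFieldType.
Hypothesis charF0 : [pchar F] =i pred0.
Local Notation P := {mpoly F[3]}.

Lemma natF_neq0 n : (n.+1%:R : F) != 0.
Proof. by move/pcharf0P: charF0 => ->. Qed.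

Definition sB : P := x2 F * (x3 F - x1 F).
Definition tB : P := x1 F * (x3 F - x2 F).
Definition sig (v : 'I_3 -> F) := v 1 * (v 2 - v 0).
Definition tau (v : 'I_3 -> F) := v 0 * (v 2 - v 1).

Lemma ev_s v : sB.@[v] = sig v.
Proof. by rewrite /sB /x1 /x2 /x3 mevalM mevalB !mevalXU. Qed.
Lemma ev_t v : tB.@[v] = tau v.
Proof. by rewrite /tB /x1 /x2 /x3 mevalM mevalB !mevalXU. Qed.

Lemma quadB_st a1 a2 : quadB a1 a2 (-a1-a2) = a1 *: sB + a2 *: tB.
Proof. rewrite /quadB /sB /tB -!mul_mpolyC. ring. Qed.

Lemma inQB_st (q : P) : inQB q -> exists a b, q = a *: sB + b *: tB.
Proof.
case=> a1 [a2 [a3 [h ->]]]; exists a1, a2.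
have -> : a3 = - a1 - a2 by apply/eqP; rewrite -subr_eq0 -h; apply/eqP; ring.
exact: quadB_st.
Qed.

Lemma st_inQB a b : inQB (a *: sB + b *: tB).
Proof. exists a, b, (-a-b); split; [ring | by rewrite quadB_st]. Qed.

Lemma ev_st a b v : (a *: sB + b *: tB).@[v] = a * sig v + b * tau v.
Proof. by rewrite mevalD !mevalZ ev_s ev_t. Qed.

Lemma st_eq0 a b : a *: sB + b *: tB = 0 -> a = 0 /\ b = 0.
Proof.
move=> h; split.
  have -> : a = a * sig (pt 0 1 1) + b * tau (pt 0 1 1) by rewrite /sig /tau /pt /=; ring.
  by rewrite -ev_st h meval0.
have -> : b = a * sig (pt 1 0 1) + b * tau (pt 1 0 1) by rewrite /sig /tau /pt /=; ring.
by rewrite -ev_st h meval0.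
Qed.

Lemma st_neq0 a b : (a != 0) || (b != 0) -> a *: sB + b *: tB != 0.
Proof. by case/orP=> h; apply/eqP => /st_eq0 [ha hb]; move: h; rewrite ?ha ?hb eqxx. Qed.

Lemma QB_vanish (q : P) (p : 'I_3 -> F) : inQB q -> inB p -> q.@[p] = 0.
Proof.
case/inQB_st => a [b ->]; rewrite ev_st /sig /tau.
by case=> ->; rewrite /pt /=; ring.
Qed.

Lemma X_homog (i : 'I_3) : ('X_i : P) \is 1.-homog.
Proof. by rewrite dhomogX /= mdeg1. Qed.

Lemma QB_homog (q : P) : inQB q -> q \is 2.-homog.
Proof.
case=> a1 [a2 [a3 [_ ->]]]; rewrite /quadB /x1 /x2 /x3.
by rewrite !dhomogD ?dhomogZ // (dhomogM (X_homog _) (X_homog _)).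
Qed.

Lemma prod_SB (q : 'I_3 -> P) : (forall i, inQB (q i)) -> inSB (q 0 * q 1 * q 2).
Proof.
move=> hq; split.
  by have := dhomogM (dhomogM (QB_homog (hq 0)) (QB_homog (hq 1))) (QB_homog (hq 2)).
move=> p hp.
have h0 := QB_vanish (hq 0) hp; have h1 := QB_vanish (hq 1) hp; have h2 := QB_vanish (hq 2) hp.
split.
- by rewrite !mevalM h0 h1 h2 !mulr0.
- by move=> i; rewrite !mderivM !mevalD !mevalM h0 h1 h2 !(mul0r, mulr0, add0r, addr0).
- by move=> i j; rewrite !(mderivM, mderivD, mevalD, mevalM) h0 h1 h2 !(mul0r, mulr0, add0r, addr0).
Qed.


Definition EB (c0 c1 c2 c3 : F) : P :=
  c0 *: sB ^+ 3 + c1 *: (sB ^+ 2 * tB) + c2 *: (sB * tB ^+ 2) + c3 *: tB ^+ 3.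
Definition eB (i : 'I_4) : P := [:: sB ^+ 3; sB ^+ 2 * tB; sB * tB ^+ 2; tB ^+ 3]`_i.

Lemma I4_eta (c : 'I_4 -> F) (i : nat) (Hi : (i < 4)%N) : c (Ordinal Hi) = c (inord i).
Proof. by congr c; apply/val_inj; rewrite /= inordK. Qed.

Lemma sum_eB (c : 'I_4 -> F) :
  \sum_(i < 4) c i *: eB i = EB (c 0) (c 1) (c 2) (c 3).
Proof.
rewrite !big_ord_recl big_ord0 addr0 /EB /eB /= !addrA.
by do 4?[congr (_ + _)]; congr (c _ *: _); apply/val_inj.
Qed.

Definition evE (c0 c1 c2 c3 : F) (v : 'I_3 -> F) :=
  c0 * sig v ^+ 3 + c1 * (sig v ^+ 2 * tau v) + c2 * (sig v * tau v ^+ 2) + c3 * tau v ^+ 3.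

Lemma ev_EB c0 c1 c2 c3 v : (EB c0 c1 c2 c3).@[v] = evE c0 c1 c2 c3 v.
Proof. rewrite /EB /evE !exprS !expr0 !(ev_s, ev_t, mevalD, mevalZ, mevalM, meval1); ring. Qed.

Lemma EB_eq0 c0 c1 c2 c3 : EB c0 c1 c2 c3 = 0 -> [/\ c0 = 0, c1 = 0, c2 = 0 & c3 = 0].
Proof.
move=> h.
have hv v : evE c0 c1 c2 c3 v = 0 by rewrite -ev_EB h meval0.
have h0 : c0 = 0.
  by rewrite -(hv (pt 0 1 1)) /evE /sig /tau /pt /=; ring.
have h3 : c3 = 0.
  by rewrite -(hv (pt 1 0 1)) /evE /sig /tau /pt /=; ring.
have h1 : c1 = 0.
  have : (11.+1)%:R * c1 = 0.
    rewrite -[0](subrr 0) -{1}(hv (pt 1 2 3)) -(mulr0 4%:R) -(hv (pt 1 1 2)).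
    by rewrite /evE /sig /tau /pt /= h0 h3; ring.
  by move/eqP; rewrite mulf_eq0 (negbTE (natF_neq0 _)) => /eqP.
have h2 : c2 = 0.
  by rewrite -(hv (pt 1 1 2)) /evE /sig /tau /pt /= h0 h3 h1; ring.
by split.
Qed.


Lemma quad_factor (d0 d1 d2 : F) : exists a b e0 e1 : F,
  [/\ (a != 0) || (b != 0), d0 = a * e0, d1 = a * e1 + b * e0 & d2 = b * e1].
Proof.
have [->|d0n] := eqVneq d0 0.
  by exists 0, 1, d1, d2; rewrite oner_neq0 orbT; split => //; ring.
have [r hr] := @solve_monicpoly F 2 (fun i => - [:: d2; d1]`_i / d0) isT.
exists 1, (- r), d0, (d1 + r * d0); rewrite oner_neq0; split => //; try ring.
move: hr; rewrite !big_ord_recr big_ord0 /= => hr.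
have e : d0 * r ^+ 2 = - d2 - d1 * r by rewrite hr; field.
have -> : - r * (d1 + r * d0) = - d1 * r - d0 * r ^+ 2 by ring.
by rewrite e; ring.
Qed.

Lemma cubic_factor (c0 c1 c2 c3 : F) : exists a b d0 d1 d2 : F,
  [/\ (a != 0) || (b != 0), c0 = a * d0, c1 = a * d1 + b * d0,
      c2 = a * d2 + b * d1 & c3 = b * d2].
Proof.
have [->|c0n] := eqVneq c0 0.
  by exists 0, 1, c1, c2, c3; rewrite oner_neq0 orbT; split => //; ring.
have [r hr] := @solve_monicpoly F 3 (fun i => - [:: c3; c2; c1]`_i / c0) isT.
exists 1, (- r), c0, (c1 + r * c0), (c2 + r * (c1 + r * c0)); rewrite oner_neq0.
split => //; try ring.
move: hr; rewrite !big_ord_recr big_ord0 /= => hr.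
have e : c0 * r ^+ 3 = - c3 - c2 * r - c1 * r ^+ 2 by rewrite hr; field.
have -> : - r * (c2 + r * (c1 + r * c0)) = - c2 * r - c1 * r ^+ 2 - c0 * r ^+ 3 by ring.
by rewrite e; ring.
Qed.

Definition lin (a b : F) : P := a *: sB + b *: tB.

Lemma EB_factor (c0 c1 c2 c3 : F) :
  [|| c0 != 0, c1 != 0, c2 != 0 | c3 != 0] ->
  exists a0 b0 a1 b1 a2 b2 : F,
    [/\ (a0 != 0) || (b0 != 0), (a1 != 0) || (b1 != 0), (a2 != 0) || (b2 != 0) &
        EB c0 c1 c2 c3 = lin a0 b0 * lin a1 b1 * lin a2 b2].
Proof.
move=> hc.
have [a0 [b0 [d0 [d1 [d2 [n0 e0 e1 e2 e3]]]]]] := cubic_factor c0 c1 c2 c3.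
have [a1 [b1 [f0 [f1 [n1 g0 g1 g2]]]]] := quad_factor d0 d1 d2.
exists a0, b0, a1, b1, f0, f1; split => //.
  have [z0|] := eqVneq f0 0; last by move=> h; apply/orP; left.
  have [z1|] := eqVneq f1 0; last by move=> h; apply/orP; right.
  move: hc; rewrite e0 e1 e2 e3 g0 g1 g2 z0 z1.
  by rewrite !(mulr0, mul0r, addr0) eqxx.
rewrite /EB /lin e0 e1 e2 e3 g0 g1 g2 -!mul_mpolyC.
ring.
Qed.


Lemma or_neq0 (x y : F) : (x = 0 -> y = 0 -> False) -> (x != 0) || (y != 0).
Proof.
move=> h; have [x0|] := eqVneq x 0; last by [].
by have [y0|] := eqVneq y 0; [case: (h x0 y0) | rewrite orbT].
Qed.

Lemma key_point (a b : F) : (a != 0) || (b != 0) ->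
  exists v, a * sig v + b * tau v = 0 /\ ((sig v != 0) || (tau v != 0)).
Proof.
move=> hab.
have [eab|nab] := eqVneq a b.
  exists (pt 3 6 4); rewrite /sig /tau /pt /= eab; split; first ring.
  have -> : (6 : F) * (4 - 3) = 5.+1%:R by ring.
  by rewrite natF_neq0.
have nab' : a - b != 0 by rewrite subr_eq0.
exists (pt 1 (- 2%:R * b / (a - b)) 2); rewrite /sig /tau /pt /=; split.
  by field.
apply: or_neq0 => h1 h2.
have : (1.+1%:R : F) = 0.
  by rewrite -[0](addr0 0) -{1}h1 -h2; ring.
by move/eqP; rewrite (negbTE (natF_neq0 _)).
Qed.

Lemma parallel (a b c d s t : F) : (a != 0) || (b != 0) -> (s != 0) || (t != 0) ->
  a * s + b * t = 0 -> c * s + d * t = 0 -> exists l, c = l * a /\ d = l * b.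
Proof.
move=> hab hst e1 e2.
have hx : a * d - b * c = 0.
  case/orP: hst => hs.
    have : s * (a * d - b * c) = 0.
      have -> : s * (a * d - b * c) = d * (a * s + b * t) - b * (c * s + d * t) by ring.
      by rewrite e1 e2 !mulr0 subrr.
    by move/eqP; rewrite mulf_eq0 (negbTE hs) => /eqP.
  have : t * (a * d - b * c) = 0.
    have -> : t * (a * d - b * c) = a * (c * s + d * t) - c * (a * s + b * t) by ring.
    by rewrite e1 e2 !mulr0 subrr.
  by move/eqP; rewrite mulf_eq0 (negbTE hs) => /eqP.
have [a0|an] := eqVneq a 0.
  have bn : b != 0 by move: hab; rewrite a0 eqxx.
  exists (d / b); split; last by field.
  move: hx; rewrite a0 mul0r sub0r => /eqP; rewrite oppr_eq0 mulf_eq0 (negbTE bn) => /eqP ->.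
  by rewrite mulr0.
exists (c / a); split; first by field.
have -> : d = a * d / a by field.
have -> : a * d = b * c by apply/eqP; rewrite -subr_eq0 hx.
by field.
Qed.

Lemma prop_sym (p q : P) : proportional p q -> proportional q p.
Proof.
case=> c [cn ->]; exists c^-1; split; first by rewrite invr_eq0.
by rewrite scalerA mulVf // scale1r.
Qed.

Lemma QB_lin (q : P) : inQB q -> q != 0 ->
  exists a b, q = lin a b /\ ((a != 0) || (b != 0)).
Proof.
case/inQB_st => a [b ->] qn; exists a, b; split => //.
apply: or_neq0 => a0 b0.
by move: qn; rewrite a0 b0 !scale0r addr0 eqxx.
Qed.

Lemma QB_point (q' : P) : inQB q' -> q' != 0 -> exists v, q'.@[v] = 0 /\
  forall q, inQB q -> q != 0 -> q.@[v] = 0 -> proportional q q'.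
Proof.
move=> h1 h2; have [a [b [-> hab]]] := QB_lin h1 h2.
have [v [hv hst]] := key_point hab.
exists v; split; first by rewrite /lin ev_st.
move=> q hq qn; have [c [d [-> hcd]]] := QB_lin hq qn.
rewrite /lin ev_st => e.
have [l [ec ed]] := parallel hab hst hv e; rewrite ec ed in hcd *.
exists l; split; last by rewrite scalerDr !scalerA.
apply/negP => /eqP l0; move: hcd; rewrite l0 !mul0r eqxx.
by [].
Qed.

Lemma cancel_l (p A B : P) : p != 0 -> p * A = p * B -> A = B.
Proof. by move=> pn; apply: mulfI. Qed.

Lemma two (q1' q2' q1 q2 : P) (k : F) :
  inQB q1' -> q1' != 0 -> inQB q2' -> q2' != 0 ->
  inQB q1 -> q1 != 0 -> inQB q2 -> q2 != 0 -> k != 0 ->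
  q1' * q2' = k *: (q1 * q2) ->
  (proportional q1' q1 /\ proportional q2' q2) \/
  (proportional q1' q2 /\ proportional q2' q1).
Proof.
move=> i1' n1' i2' n2' i1 n1 i2 n2 kn e.
have [v [hv hq]] := QB_point i1' n1'.
have := congr1 (meval v) e; rewrite mevalM mevalZ mevalM hv mul0r.
move/esym/eqP; rewrite !mulf_eq0 (negbTE kn) /= => /orP [] /eqP z.
  have [l [ln hl]] := hq _ i1 n1 z.
  left; split; first by apply: prop_sym; exists l.
  exists (k * l); split; first by rewrite mulf_neq0.
  apply: (@cancel_l q1' _ _ n1'); rewrite e hl -!mul_mpolyC rmorphM /=; ring.
have [l [ln hl]] := hq _ i2 n2 z.
right; split; first by apply: prop_sym; exists l.
exists (k * l); split; first by rewrite mulf_neq0.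
apply: (@cancel_l q1' _ _ n1'); rewrite e hl -!mul_mpolyC rmorphM /=; ring.
Qed.


Lemma I3_ind (Q : 'I_3 -> Prop) : Q 0 -> Q 1 -> Q 2 -> forall i, Q i.
Proof.
move=> h0 h1 h2 [[|[|[|]]]] // Hi.
- by have -> : Ordinal Hi = 0 by apply/val_inj.
- by have -> : Ordinal Hi = 1 by apply/val_inj.
- by have -> : Ordinal Hi = 2 by apply/val_inj.
Qed.

Lemma three (q q' : 'I_3 -> P) (k : F) :
  (forall i, inQB (q i) /\ q i != 0) -> (forall i, inQB (q' i) /\ q' i != 0) ->
  k != 0 -> q' 0 * q' 1 * q' 2 = k *: (q 0 * q 1 * q 2) ->
  exists s : 'S_3, forall i, proportional (q' i) (q (s i)).
Proof.
move=> hq hq' kn e.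
have [i0 n0] := hq 0; have [i1 n1] := hq 1; have [i2 n2] := hq 2.
have [i0' n0'] := hq' 0; have [i1' n1'] := hq' 1; have [i2' n2'] := hq' 2.
have [v [hv hp]] := QB_point i0' n0'.
have := congr1 (meval v) e; rewrite !mevalM mevalZ !mevalM hv !mul0r.
move/esym/eqP; rewrite !mulf_eq0 (negbTE kn) /= -orbA => /or3P [] /eqP z.
- have [l [ln hl]] := hp _ i0 n0 z.
  have e' : q' 1 * q' 2 = (k * l) *: (q 1 * q 2).
    apply: (@cancel_l (q' 0) _ _ n0'); rewrite mulrA e hl -!mul_mpolyC rmorphM /=; ring.
  have p0 : proportional (q' 0) (q 0) by apply: prop_sym; exists l.
  case: (two i1' n1' i2' n2' i1 n1 i2 n2 (mulf_neq0 kn ln) e') => [[p1 p2]|[p1 p2]].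
    by exists 1%g; apply: I3_ind; rewrite perm1.
  exists (tperm (1%R : 'I_3) 2%R); apply: I3_ind; by rewrite !permE /=.
- have [l [ln hl]] := hp _ i1 n1 z.
  have e' : q' 1 * q' 2 = (k * l) *: (q 0 * q 2).
    apply: (@cancel_l (q' 0) _ _ n0'); rewrite mulrA e hl -!mul_mpolyC rmorphM /=; ring.
  have p0 : proportional (q' 0) (q 1) by apply: prop_sym; exists l.
  case: (two i1' n1' i2' n2' i0 n0 i2 n2 (mulf_neq0 kn ln) e') => [[p1 p2]|[p1 p2]].
    exists (tperm (0%R : 'I_3) 1%R); apply: I3_ind; by rewrite !permE /=.
  exists (tperm (0%R : 'I_3) 1%R * tperm (0%R : 'I_3) 2%R)%g; apply: I3_ind;
    by rewrite !permM !permE /=.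
- have [l [ln hl]] := hp _ i2 n2 z.
  have e' : q' 1 * q' 2 = (k * l) *: (q 0 * q 1).
    apply: (@cancel_l (q' 0) _ _ n0'); rewrite mulrA e hl -!mul_mpolyC rmorphM /=; ring.
  have p0 : proportional (q' 0) (q 2) by apply: prop_sym; exists l.
  case: (two i1' n1' i2' n2' i0 n0 i1 n1 (mulf_neq0 kn ln) e') => [[p1 p2]|[p1 p2]].
    exists (tperm (0%R : 'I_3) 2%R * tperm (0%R : 'I_3) 1%R)%g; apply: I3_ind;
      by rewrite !permM !permE /=.
  exists (tperm (0%R : 'I_3) 2%R); apply: I3_ind; by rewrite !permE /=.
Qed.


Lemma mulrnS_eq0 (x : F) n : x *+ n.+1 = 0 -> x = 0.
Proof. by move/eqP; rewrite -mulr_natr mulf_eq0 (negbTE (natF_neq0 n)) orbF => /eqP. Qed.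

Lemma prod_coord (k : 'I_3) (m : 'X_{1..3}) d : mdeg m = d ->
  \prod_(l < 3) ((l == k)%:R : F) ^+ m l = (m == U_(k) *+ d)%MM%:R.
Proof.
move=> hd; rewrite (bigD1 k) //= eqxx expr1n mul1r.
have [->|ne] := eqVneq m (U_(k) *+ d)%MM.
  by apply: big1 => l lk; rewrite mulmnE mnm1E (negbTE lk) eq_sym (negbTE lk) /= mul0n expr0.
have : [exists l, (l != k) && (m l != 0%N)].
  apply: contraT => /existsPn h; case/eqP: ne; apply/mnmP => l.
  rewrite mulmnE mnm1E; have [<-|lk] := eqVneq k l.
    rewrite mul1n -hd mdegE (bigD1 k) //= big1 ?addn0 // => l' lk'.
    by move: (h l'); rewrite lk' /= negbK => /eqP.
  by move: (h l); rewrite eq_sym lk /= negbK mul0n => /eqP.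
case/existsP => l /andP [lk ml].
by rewrite (bigD1 l) //= (negbTE lk) expr0n (negbTE ml) mul0r.
Qed.

Lemma eval_coord (h : P) (k : 'I_3) d : (forall m, h@_m != 0 -> mdeg m = d) ->
  h.@[fun l => (l == k)%:R] = h@_(U_(k) *+ d)%MM.
Proof.
move=> hd; rewrite mevalE [in RHS](mpolyE h) raddf_sum /=.
apply: eq_big_seq => m; rewrite mcoeff_msupp => hm.
by rewrite (prod_coord k (hd _ hm)) mcoeffZ mcoeffX.
Qed.

Lemma H2 (g : P) (i j k : 'I_3) : g \is 6.-homog ->
  (mderiv i (mderiv j g)).@[fun l => (l == k)%:R] = 0 ->
  g@_(U_(k) *+ 4 + U_(i) + U_(j))%MM = 0.
Proof.
move=> hg; rewrite (@eval_coord _ _ 4).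
  by rewrite !mcoeff_mderiv => /mulrnS_eq0 /mulrnS_eq0.
move=> m; rewrite !mcoeff_mderiv => hm.
have hn : g@_(m + U_(i) + U_(j))%MM != 0.
  by apply: contraNneq hm => ->; rewrite !mul0rn.
have hM : mdeg (m + U_(i) + U_(j))%MM = 6.
  by apply/eqP; apply: contraNT hn => /(dhomog_nemf_coeff hg) ->; rewrite eqxx.
by move: hM; rewrite !mdegD !mdeg1 !addn1 => -[].
Qed.

Lemma decomp (m : 'X_{1..3}) (k : 'I_3) : mdeg m = 6 -> (4 <= m k)%N ->
  exists i j : 'I_3, m = (U_(k) *+ 4 + U_(i) + U_(j))%MM.
Proof.
move=> hd hk.
set a := (m - U_(k) *+ 4)%MM.
have ma : m = (U_(k) *+ 4 + a)%MM.
  apply/mnmP => l; rewrite mnmDE mnmBE mulmnE mnm1E.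
  by have [<-|_] := eqVneq k l; rewrite ?mul1n ?mul0n ?subn0 // subnKC.
clearbody a.
have da : mdeg a = 2.
  by move: hd; rewrite ma mdegD mdegMn mdeg1 => h; lia.
have : [exists i, (0 < a i)%N].
  apply: contraT => /existsPn h; move: da; rewrite mdegE big1 // => l _.
  by move: (h l); rewrite lt0n negbK => /eqP.
case/existsP => i ai.
set b := (a - U_(i))%MM.
have ab : a = (b + U_(i))%MM.
  apply/mnmP => l; rewrite mnmDE mnmBE mnm1E.
  by have [<-|_] := eqVneq i l; rewrite ?eqxx /= ?subn0 ?addn0 // subnK.
have : mdeg b == 1%N by move: da; rewrite ab mdegD mdeg1 => h; apply/eqP; lia.
rewrite mdeg_eq1 => /existsP [j /eqP bj].
by exists j, i; rewrite ma ab bj addmA.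
Qed.


Definition m3 (a b c : nat) : 'X_{1..3} := [multinom [tuple a; b; c]].
Definition LB : seq 'X_{1..3} :=
  [:: m3 3 3 0; m3 3 0 3; m3 0 3 3; m3 3 2 1; m3 3 1 2; m3 2 3 1; m3 1 3 2;
      m3 2 1 3; m3 1 2 3; m3 2 2 2].

Lemma m3_eta (m : 'X_{1..3}) : m = m3 (m 0) (m 1) (m 2).
Proof. by apply/mnmP; apply: I3_ind. Qed.

Lemma sum3 (f : 'I_3 -> nat) : (\sum_(i < 3) f i)%N = (f 0%R + f 1%R + f 2%R)%N.
Proof.
rewrite !big_ord_recl big_ord0 addn0 addnA.
by do 2?[congr (_ + _)%N]; congr f; apply/val_inj.
Qed.

Lemma mdeg3 (m : 'X_{1..3}) : mdeg m = (m 0%R + m 1%R + m 2%R)%N.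
Proof. by rewrite mdegE sum3. Qed.

Lemma inLB a b c : (a <= 3)%N -> (b <= 3)%N -> (c <= 3)%N -> (a + b + c == 6)%N ->
  m3 a b c \in LB.
Proof.
by case: a => [|[|[|[|a]]]] //; case: b => [|[|[|[|b]]]] //; case: c => [|[|[|[|c]]]].
Qed.

Lemma notLB_big (m : 'X_{1..3}) : mdeg m = 6 -> m \notin LB -> exists k, (4 <= m k)%N.
Proof.
move=> hd hL.
case: (leqP 4 (m 0)) => h0; first by exists 0.
case: (leqP 4 (m 1)) => h1; first by exists 1.
case: (leqP 4 (m 2)) => h2; first by exists 2.
case/negP: hL; rewrite (m3_eta m); apply: inLB => //.
by rewrite -mdeg3 hd.
Qed.

Lemma coord_pt (k : 'I_3) : exists p : 'I_3 -> F, inB p /\ p =1 (fun l => (l == k)%:R).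
Proof.
move: k; apply: I3_ind.
- exists (pt 1 0 0); split; first by rewrite /inB; constructor 3.
  by apply: I3_ind.
- exists (pt 0 1 0); split; first by rewrite /inB; constructor 2.
  by apply: I3_ind.
- exists (pt 0 0 1); split; first by rewrite /inB; constructor 1.
  by apply: I3_ind.
Qed.

Lemma coef_zero (g : P) : inSB g -> forall m, m \notin LB -> g@_m = 0.
Proof.
case=> hg hv m hL.
have [hd|hd] := eqVneq (mdeg m) 6; last exact: dhomog_nemf_coeff hg hd.
have [k hk] := notLB_big hd hL.
have [i [j ->]] := decomp hd hk.
apply: H2 => //.
have [p [hp pe]] := coord_pt k.
have [_ _ h2] := hv p hp.
by rewrite -(meval_eq _ pe) h2.
Qed.


Definition GB (g : P) : P := \sum_(l <- LB) g@_l *: 'X_[l].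

Lemma uniq_LB : uniq LB. Proof. by []. Qed.

Lemma g_eq_G (g : P) : inSB g -> g = GB g.
Proof.
move=> hg; apply/mpolyP => m; rewrite /GB raddf_sum /=.
rewrite (eq_bigr (fun l => g@_l * (l == m)%:R)); last by move=> l _; rewrite mcoeffZ mcoeffX.
have [hm|hm] := boolP (m \in LB).
  rewrite (bigD1_seq m) //= ?uniq_LB // eqxx mulr1 big1 ?addr0 // => l lm.
  by rewrite (negbTE lm) mulr0.
rewrite big1_seq ?(coef_zero hg hm) // => l /andP [_ hl].
have -> : (l == m) = false by apply: contraNF hm => /eqP <-.
by rewrite mulr0.
Qed.

Lemma pt111 : pt 1 1 1 =1 (fun _ => 1 : F).
Proof. by apply: I3_ind. Qed.

Lemma mderiv_sumL (T : Type) i (r : seq T) (f : T -> P) :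
  mderiv i (\sum_(l <- r) f l) = \sum_(l <- r) mderiv i (f l).
Proof.
by elim: r => [|x r ih]; rewrite ?big_nil ?mderiv0 // !big_cons mderivD ih.
Qed.

Lemma meval_sumL (T : Type) v (r : seq T) (f : T -> P) :
  (\sum_(l <- r) f l).@[v] = \sum_(l <- r) (f l).@[v].
Proof.
by elim: r => [|x r ih]; rewrite ?big_nil ?meval0 // !big_cons mevalD ih.
Qed.

Lemma ev111 (g : P) (i j : 'I_3) :
  (mderiv i (mderiv j (GB g))).@[pt 1 1 1] =
  \sum_(l <- LB) g@_l * ((l j)%:R * ((l - U_(j))%MM i)%:R).
Proof.
rewrite /GB (mderiv_sumL j) (mderiv_sumL i) meval_sumL; apply: eq_bigr => l _.
rewrite !(mderivZ, mderivX) !(mevalZ, mevalX) big1 ?mulr1 ?mulrA //.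
by move=> k _; rewrite pt111 expr1n.
Qed.


Lemma eqs111 (g : P) : inSB g -> forall i j : 'I_3,
  \sum_(l <- LB) g@_l * ((l j)%:R * ((l - U_(j))%MM i)%:R) = 0.
Proof.
move=> hg i j; rewrite -ev111 -(g_eq_G hg).
have [_ h] := hg; have hp : inB (pt 1 1 1 : 'I_3 -> F) by constructor 4.
by have [_ _ ->] := h _ hp.
Qed.

Lemma m3_0 a b c : m3 a b c 0 = a. Proof. by []. Qed.
Lemma m3_1 a b c : m3 a b c 1 = b. Proof. by []. Qed.
Lemma m3_2 a b c : m3 a b c 2 = c. Proof. by []. Qed.


End Main.


Section Main2.
Variable F : closedFieldType.
Hypothesis charF0 : [pchar F] =i pred0.
Local Notation P := {mpoly F[3]}.
Lemma lincomb6 (x1 x2 x3 x4 x5 x6 T l1 l2 l3 l4 l5 l6 : F) :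
  x1 = 0 -> x2 = 0 -> x3 = 0 -> x4 = 0 -> x5 = 0 -> x6 = 0 ->
  (29.+1)%:R * T = l1 * x1 + l2 * x2 + l3 * x3 + l4 * x4 + l5 * x5 + l6 * x6 -> T = 0.
Proof.
move=> -> -> -> -> -> -> /eqP; rewrite !mulr0 !addr0 mulf_eq0 (negbTE (natF_neq0 charF0 _)) /=.
by move/eqP.
Qed.

Lemma X_m3 a b c : 'X_[m3 a b c] = x1 F ^+ a * x2 F ^+ b * x3 F ^+ c.
Proof.
have -> : m3 a b c = (U_(0%R) *+ a + U_(1%R) *+ b + U_(2%R) *+ c)%MM.
  apply/mnmP; apply: I3_ind;
    by rewrite !mnmDE !mulmnE !mnm1E /= ?(m3_0, m3_1, m3_2) ?mul1n ?mul0n ?addn0 ?add0n.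
by rewrite !mpolyXD -!mpolyXn.
Qed.


Lemma linsys (A B C D E Fv G H I J : F) :
  A * (3 * 2) + (B * (3 * 2) + (C * (0 * 0) + (D * (3 * 2) + (E * (3 * 2) + (Fv * (2 * 1) + (G * (1 * 0) + (H * (2 * 1) + (I * (1 * 0) + (J * (2 * 1) + 0))))))))) = 0 ->
  A * (3 * 2) + (B * (0 * 0) + (C * (3 * 2) + (D * (2 * 1) + (E * (1 * 0) + (Fv * (3 * 2) + (G * (3 * 2) + (H * (1 * 0) + (I * (2 * 1) + (J * (2 * 1) + 0))))))))) = 0 ->
  A * (0 * 0) + (B * (3 * 2) + (C * (3 * 2) + (D * (1 * 0) + (E * (2 * 1) + (Fv * (1 * 0) + (G * (2 * 1) + (H * (3 * 2) + (I * (3 * 2) + (J * (2 * 1) + 0))))))))) = 0 ->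
  A * (3 * 3) + (B * (0 * 3) + (C * (3 * 0) + (D * (2 * 3) + (E * (1 * 3) + (Fv * (3 * 2) + (G * (3 * 1) + (H * (1 * 2) + (I * (2 * 1) + (J * (2 * 2) + 0))))))))) = 0 ->
  A * (0 * 3) + (B * (3 * 3) + (C * (3 * 0) + (D * (1 * 3) + (E * (2 * 3) + (Fv * (1 * 2) + (G * (2 * 1) + (H * (3 * 2) + (I * (3 * 1) + (J * (2 * 2) + 0))))))))) = 0 ->
  A * (0 * 3) + (B * (3 * 0) + (C * (3 * 3) + (D * (1 * 2) + (E * (2 * 1) + (Fv * (1 * 3) + (G * (2 * 3) + (H * (3 * 1) + (I * (3 * 2) + (J * (2 * 2) + 0))))))))) = 0 ->
  [/\ A = - C - I - H - B, G = - 3%:R * C - I, Fv = 3%:R * C + 2%:R * I + H,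
      E = - 3%:R * B - H & D = 3%:R * B + I + 2%:R * H /\ J = - 2%:R * I - 2%:R * H].
Proof.
move=> e00 e11 e22 e01 e02 e12.
split; [| | | | split]; apply/eqP; rewrite -subr_eq0; apply/eqP.
- apply: (@lincomb6 _ _ _ _ _ _ _ 1 1 10%:R 2%:R (- 4%:R) (- 4%:R) e00 e11 e22 e01 e02 e12).
  ring.
- apply: (@lincomb6 _ _ _ _ _ _ _ 6%:R 3%:R 3%:R (- 6%:R) (- 6%:R) 6%:R e00 e11 e22 e01 e02 e12).
  ring.
- apply: (@lincomb6 _ _ _ _ _ _ _ (- 6%:R) 6%:R (- 12%:R) 0 12%:R (- 6%:R) e00 e11 e22 e01 e02 e12).
  ring.
- apply: (@lincomb6 _ _ _ _ _ _ _ 3%:R 6%:R 3%:R (- 6%:R) 6%:R (- 6%:R) e00 e11 e22 e01 e02 e12).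
  ring.
- apply: (@lincomb6 _ _ _ _ _ _ _ 6%:R (- 6%:R) (- 12%:R) 0 (- 6%:R) 12%:R e00 e11 e22 e01 e02 e12).
  ring.
- apply: (@lincomb6 _ _ _ _ _ _ _ (- 9%:R) (- 9%:R) 9%:R 12%:R 0 0 e00 e11 e22 e01 e02 e12).
  ring.
Qed.

Lemma EB_expand (k0 k1 k2 k3 : F) :
  EB k0 k1 k2 k3 = (- k0 - k1 - k2 - k3) *: (x1 F ^+ 3 * x2 F ^+ 3 * x3 F ^+ 0) + (k3 *: (x1 F ^+ 3 * x2 F ^+ 0 * x3 F ^+ 3) + (k0 *: (x1 F ^+ 0 * x2 F ^+ 3 * x3 F ^+ 3) + ((3%:R * k3 + k1 + 2%:R * k2) *: (x1 F ^+ 3 * x2 F ^+ 2 * x3 F ^+ 1) + ((- 3%:R * k3 - k2) *: (x1 F ^+ 3 * x2 F ^+ 1 * x3 F ^+ 2) + ((3%:R * k0 + 2%:R * k1 + k2) *: (x1 F ^+ 2 * x2 F ^+ 3 * x3 F ^+ 1) + ((- 3%:R * k0 - k1) *: (x1 F ^+ 1 * x2 F ^+ 3 * x3 F ^+ 2) + (k2 *: (x1 F ^+ 2 * x2 F ^+ 1 * x3 F ^+ 3) + (k1 *: (x1 F ^+ 1 * x2 F ^+ 2 * x3 F ^+ 3) + ((- 2%:R * k1 - 2%:R * k2) *: (x1 F ^+ 2 * x2 F ^+ 2 * x3 F ^+ 2) + 0))))))))).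
Proof. rewrite /EB /sB /tB -!mul_mpolyC. ring. Qed.

Ltac simp_e h := rewrite /LB !big_cons big_nil !mnmBE !mnm1E /= !(m3_0, m3_1, m3_2) /= ?subn0 ?subn1 /= in h.

Lemma SB_span (g : P) : inSB g ->
  g = EB g@_(m3 0 3 3) g@_(m3 1 2 3) g@_(m3 2 1 3) g@_(m3 3 0 3).
Proof.
move=> hg.
have e00 := eqs111 charF0 hg 0 0; have e11 := eqs111 charF0 hg 1 1; have e22 := eqs111 charF0 hg 2 2.
have e01 := eqs111 charF0 hg 0 1; have e02 := eqs111 charF0 hg 0 2; have e12 := eqs111 charF0 hg 1 2.
simp_e e00. simp_e e11. simp_e e22. simp_e e01. simp_e e02. simp_e e12.
have [rA rG rF rE [rD rJ]] := linsys e00 e11 e22 e01 e02 e12.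
rewrite {1}(g_eq_G charF0 hg) /GB /LB !big_cons big_nil rA rG rF rE rD rJ !X_m3.
exact/esym/EB_expand.
Qed.

End Main2.


Section Main3.
Variable F : closedFieldType.
Hypothesis charF0 : [pchar F] =i pred0.
Local Notation P := {mpoly F[3]}.

Lemma SB_add (f g : P) : inSB f -> inSB g -> inSB (f + g).
Proof.
case=> hf vf [hg vg]; split; first by rewrite dhomogD.
move=> p hp; have [f0 f1 f2] := vf p hp; have [g0 g1 g2] := vg p hp.
split; first by rewrite mevalD f0 g0 addr0.
  by move=> i; rewrite mderivD mevalD f1 g1 addr0.
by move=> i j; rewrite !mderivD mevalD f2 g2 addr0.
Qed.

Lemma SB_scale (c : F) (f : P) : inSB f -> inSB (c *: f).
Proof.
case=> hf vf; split; first by rewrite dhomogZ.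
move=> p hp; have [f0 f1 f2] := vf p hp.
split; first by rewrite mevalZ f0 mulr0.
  by move=> i; rewrite mderivZ mevalZ f1 mulr0.
by move=> i j; rewrite !mderivZ mevalZ f2 mulr0.
Qed.

Lemma SB_prod3 (a b c : P) : inQB a -> inQB b -> inQB c -> inSB (a * b * c).
Proof.
move=> ha hb hc.
have := @prod_SB F (fun i : 'I_3 => [:: a; b; c]`_i).
by apply; apply: I3_ind.
Qed.

Lemma sB_QB : inQB (sB F).
Proof. by have := st_inQB (1 : F) 0; rewrite scale1r scale0r addr0. Qed.
Lemma tB_QB : inQB (tB F).
Proof. by have := st_inQB (0 : F) 1; rewrite scale1r scale0r add0r. Qed.

Lemma EB_SB (c0 c1 c2 c3 : F) : inSB (EB c0 c1 c2 c3).
Proof.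
rewrite /EB; have hs := sB_QB; have ht := tB_QB.
apply: SB_add; [apply: SB_add; [apply: SB_add|]|]; apply: SB_scale.
- by rewrite !exprS expr0 mulr1 mulrA; apply: SB_prod3.
- by rewrite !exprS expr0 mulr1; apply: SB_prod3.
- by rewrite !exprS expr0 mulr1 mulrA; apply: SB_prod3.
- by rewrite !exprS expr0 mulr1 mulrA; apply: SB_prod3.
Qed.

Lemma I4_ind (Q : 'I_4 -> Prop) : Q 0 -> Q 1 -> Q 2 -> Q 3 -> forall i, Q i.
Proof.
move=> h0 h1 h2 h3 [[|[|[|[|]]]] // Hi].
- by have -> : Ordinal Hi = 0 by apply/val_inj.
- by have -> : Ordinal Hi = 1 by apply/val_inj.
- by have -> : Ordinal Hi = 2 by apply/val_inj.
- by have -> : Ordinal Hi = 3 by apply/val_inj.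
Qed.

Lemma prod3_perm (q : 'I_3 -> P) (s : 'S_3) : q (s 0) * q (s 1) * q (s 2) = q 0 * q 1 * q 2.
Proof.
have e (f : 'I_3 -> P) : \prod_(i < 3) f i = f 0 * f 1 * f 2.
  rewrite !big_ord_recl big_ord0 mulr1 mulrA.
  by do 2?[congr (_ * _)]; congr f; apply/val_inj.
rewrite -e -(e (fun i => q (s i))).
by apply: esym; exact: (reindex_inj (@perm_inj _ s)).
Qed.

End Main3.

Local Open Scope ring_scope.

Theorem lemma3p3 (F : closedFieldType) (charF0 : [pchar F] =i pred0) :
  (* S_B is a 4-dimensional space: it has a basis e_0, ..., e_3 *)
  (exists e : 'I_4 -> {mpoly F[3]},
      (forall f, inSB f <-> exists c : 'I_4 -> F, f = \sum_(i < 4) c i *: e i)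
      /\ (forall c : 'I_4 -> F, \sum_(i < 4) c i *: e i = 0 -> forall i, c i = 0))
  (* the product map sends (Q_B)^3 into S_B *)
  /\ (forall q : 'I_3 -> {mpoly F[3]}, (forall i, inQB (q i)) ->
        inSB (q 0 * q 1 * q 2))
  (* the induced map P(Q_B)^3 -> P(S_B) is surjective *)
  /\ (forall f, inSB f -> f != 0 ->
        exists q : 'I_3 -> {mpoly F[3]},
          (forall i, inQB (q i) /\ q i != 0) /\ proportional f (q 0 * q 1 * q 2))
  (* its fibres are exactly the S_3-orbits, i.e. it is the quotient map
     (P^1)^3 -> (P^1)^3 / S_3 *)
  /\ (forall q q' : 'I_3 -> {mpoly F[3]},
        (forall i, inQB (q i) /\ q i != 0) ->
        (forall i, inQB (q' i) /\ q' i != 0) ->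
        (proportional (q' 0 * q' 1 * q' 2) (q 0 * q 1 * q 2) <->
         exists s : 'S_3, forall i, proportional (q' i) (q (s i)))).
Proof.
split.
  exists (@eB F); split.
    move=> f; split.
      move=> hf; rewrite (SB_span charF0 hf).
      exists (fun i : 'I_4 => [:: f@_(m3 0 3 3); f@_(m3 1 2 3); f@_(m3 2 1 3); f@_(m3 3 0 3)]`_i).
      by rewrite sum_eB.
    by case=> c ->; rewrite sum_eB; exact: EB_SB.
  move=> c; rewrite sum_eB => /(EB_eq0 charF0) [h0 h1 h2 h3]; by apply: I4_ind.
split; first exact: prod_SB.
split.
  move=> f hf fn.
  have ef := SB_span charF0 hf.
  move: ef; set k0 := f@_(m3 0 3 3); set k1 := f@_(m3 1 2 3);
    set k2 := f@_(m3 2 1 3); set k3 := f@_(m3 3 0 3) => ef.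
  have hk : [|| k0 != 0, k1 != 0, k2 != 0 | k3 != 0].
    apply: contraR fn; rewrite !negb_or !negbK => /and4P [/eqP z0 /eqP z1 /eqP z2 /eqP z3].
    by rewrite ef z0 z1 z2 z3 /EB !scale0r !addr0.
  have [a0 [b0 [a1 [b1 [a2 [b2 [n0 n1 n2 e]]]]]]] := EB_factor hk.
  exists (fun i : 'I_3 => [:: lin a0 b0; lin a1 b1; lin a2 b2]`_i); split.
    by apply: I3_ind; split; rewrite /= ?st_neq0 //; apply: st_inQB.
  by exists 1; split; [exact: oner_neq0 | rewrite scale1r ef e].
move=> q q' hq hq'; split.
  by case=> k [kn e]; exact: (three charF0 hq hq' kn e).
case=> s hs.
have [c0 [n0 e0]] := hs 0; have [c1 [n1 e1]] := hs 1; have [c2 [n2 e2]] := hs 2.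
exists (c0 * c1 * c2); split; first by rewrite !mulf_neq0.
rewrite e0 e1 e2 -!mul_mpolyC -(prod3_perm q s) !rmorphM /=; ring.
Qed.
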